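(* The urn process is reversible in time: $(U_0,U_1,\dots,U_n)$ and $(U_n,U_{n-1},\dots,U_0)$ are equal in distribution.
   Context: Urn process: let $n\ge2$. An urn initially contains $n$ black balls. It is emptied in $n$ steps: in each of the first $n-1$ steps a uniformly random pair of balls is removed from the urn and replaced by one red ball; in step $n$ the last remaining ball is removed. $U_k$ is the number of red balls in the urn after $k$ steps, $0\le k\le n$. Equivalently, $(U_k)$ is the Markov chain with $U_0=0$ and $\mathbf P(U_{k+1}=u-1\mid U_k=u)=\binom u2/\binom{n-k}2$, $\mathbf P(U_{k+1}=u\mid U_k=u)=u(n-k-u)/\binom{n-k}2$, $\mathbf P(U_{k+1}=u+1\mid U_k=u)=\binom{n-k-u}2/\binom{n-k}2$ (for $k\le n-2$), and $U_n=0$. *)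

(* Defs.v *)
From HB Require Import structures.
From mathcomp Require Import all_boot all_order all_algebra.
Set Implicit Arguments. Unset Strict Implicit. Unset Printing Implicit Defensive.
Import Order.TTheory GRing.Theory Num.Theory.
Local Open Scope ring_scope.

(* One-step transition probability of the urn chain with n initial balls:
   probability that U_{k+1} = v given U_k = u (step k+1). *)
Definition urn_trans (n k u v : nat) : rat :=
  if (k.+2 <= n)%N then
    let d := ('C(n - k, 2))%:R in
    if v.+1 == u then ('C(u, 2))%:R / d
    else if v == u then (u * (n - k - u))%:R / d
    else if v == u.+1 then ('C(n - k - u, 2))%:R / d
    else 0
  else (* last step k = n-1: the last ball is removed, U_n = 0 *)
    (v == 0%N)%:R.

(* Probability that (U_0, ..., U_n) = (s_0, ..., s_n), for s of size n+1
   (U_0 = 0 deterministically). *)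
Definition urn_path_prob (n : nat) (s : seq nat) : rat :=
  (nth 0%N s 0 == 0%N)%:R *
  \prod_(k < n) urn_trans n k (nth 0%N s k) (nth 0%N s k.+1).

(* Main.v *)
Require Import Defs.
From mathcomp Require Import all_boot all_order all_algebra.
From Stdlib Require Import Lia Arith Ring ArithRing Classical.

Lemma bin2E y : 'C(y.+2, 2) * 2 = y.+2 * y.+1.
Proof. by rewrite (bin_ffact y.+2 2) ffactnS ffactn1. Qed.

Lemma canc2 a b : 2 * a = 2 * b -> a = b.
Proof. by move/eqP; rewrite eqn_pmul2l // => /eqP. Qed.

Lemma core_down x b c :
  'C(x.+2,2) * (x.+1`! * x`! * b`! * c.+2`!) = 'C(c.+2,2) * (x.+2`! * x.+1`! * b`! * c`!).
Proof.
apply: canc2; apply: canc2.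
have h1 := bin2E x; have h2 := bin2E c.
rewrite !factS.
move: h1 h2; set X := 'C(_,2); set Y := 'C(_,2); set B := x`!; set C := b`!; set D := c`!.
move=> h1 h2.
transitivity ((X * 2) * (2 * (x.+1 * B) * B * C * (c.+2 * (c.+1 * D)))); first by rewrite -!multE; ring.
transitivity ((Y * 2) * (2 * (x.+2 * (x.+1 * B)) * (x.+1 * B) * C * D)); last by rewrite -!multE; ring.
rewrite h1 h2 -!multE. ring.
Qed.

Lemma core_stay x b c :
  (x.+1 * b.+1) * (x.+1`! * x`! * b`! * c.+1`!) = (x.+1 * c.+1) * (x.+1`! * x`! * b.+1`! * c`!).
Proof.
rewrite (factS c) (factS b) -!multE; ring.
Qed.

Lemma core_up x b c :
  'C(b.+2,2) * (x.+2`! * x.+1`! * b`! * c`!) = 'C(x.+2,2) * (x.+1`! * x`! * b.+2`! * c`!).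
Proof.
apply: canc2; apply: canc2.
have h1 := bin2E x; have h2 := bin2E b.
rewrite !factS.
move: h1 h2; set X := 'C(_,2); set Y := 'C(_,2); set B := x`!; set C := b`!; set D := c`!.
move=> h1 h2.
transitivity ((Y * 2) * (2 * (x.+2 * (x.+1 * B)) * (x.+1 * B) * C * D)); first by rewrite -!multE; ring.
transitivity ((X * 2) * (2 * (x.+1 * B) * B * (b.+2 * (b.+1 * C)) * D)); last by rewrite -!multE; ring.
rewrite h1 h2 -!multE. ring.
Qed.

Definition Wf m u v := if v.+1 == u then 'C(u,2) else if v == u then u * (m - u)
  else if v == u.+1 then 'C(m - u,2) else 0.
Definition Wr k u v := if u.+1 == v then 'C(v,2) else if u == v then v * (k.+1 - v)
  else if u == v.+1 then 'C(k.+1 - v,2) else 0.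

Ltac conv := repeat match goal with
  | H : context [subn _ _] |- _ => rewrite -minusE in H
  | H : context [addn _ _] |- _ => rewrite -plusE in H
  | H : context [muln _ _] |- _ => rewrite -multE in H end.
Ltac nlia := conv; rewrite -?plusE -?minusE -?multE; lia.

Lemma step_nat k m u v : 0 < k -> 1 < m -> 0 < u -> u <= k -> u <= m -> 0 < v -> v <= k.+1 -> v < m ->
 Wf m u v * (v`! * v.-1`! * (m.-1 - v)`! * (k.+1 - v)`!) = Wr k u v * (u`! * u.-1`! * (m - u)`! * (k - u)`!).
Proof.
case: u => // x; case: v => // y.
move=> /leP hk /leP hm _ /leP hxk /leP hxm _ /leP hyk /leP hym.
rewrite /Wf /Wr.
repeat (case: eqP => ? /=); try nlia.
- have ? : x = y.+1 by nlia. subst x.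
  have e2 : m.-1 - y.+1 = m - y.+2 by nlia.
  have e3 : k.+1 - y.+1 = (k - y.+2).+2 by nlia.
  rewrite e2 e3; exact: core_down.
- have ? : x = y by nlia. subst x.
  have e2 : m - y.+1 = (m.-1 - y.+1).+1 by nlia.
  have e3 : k.+1 - y.+1 = (k - y.+1).+1 by nlia.
  rewrite e2 e3; exact: core_stay.
- have ? : y = x.+1 by nlia. subst y.
  have e2 : m - x.+1 = (m.-1 - x.+2).+2 by nlia.
  have e3 : k.+1 - x.+2 = k - x.+1 by nlia.
  rewrite e2 e3; exact: core_up.
Qed.

Lemma den_nat k m : 'C(k.+2,2) * (m.+2`! * m.+1`! * k.+1`! * k`!) = 'C(m.+2,2) * (m.+1`! * m`! * k.+2`! * k.+1`!).
Proof.
apply: canc2; apply: canc2.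
have h1 := bin2E k; have h2 := bin2E m.
rewrite !factS.
move: h1 h2; set X := 'C(_,2); set Y := 'C(_,2); set B := k`!; set C := m`!.
move=> h1 h2.
transitivity ((X * 2) * (2 * (m.+2 * (m.+1 * C)) * (m.+1 * C) * (k.+1 * B) * B)); first by rewrite -!multE; ring.
transitivity ((Y * 2) * (2 * (m.+1 * C) * C * (k.+2 * (k.+1 * B)) * (k.+1 * B))); last by rewrite -!multE; ring.
rewrite h1 h2 -!multE. ring.
Qed.

Local Open Scope ring_scope.
Import GRing.Theory Num.Theory.

Lemma trans_fwd n k u v : (k.+2 <= n)%N -> urn_trans n k u v = (Wf (n-k) u v)%:R / ('C(n-k,2))%:R.
Proof. move=> h; rewrite /urn_trans h /Wf /=; by repeat case: eqP => //= _; rewrite mul0r. Qed.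

Lemma trans_rev n k u v : (0 < k)%N -> (k < n)%N -> urn_trans n (n - k.+1) v u = (Wr k u v)%:R / ('C(k.+1,2))%:R.
Proof.
move=> h1 h2; have h : ((n - k.+1).+2 <= n)%N by move/leP: h1; move/leP: h2 => *; apply/leP; nlia.
have e : (n - (n - k.+1) = k.+1)%N by rewrite subKn.
rewrite /urn_trans h /Wr /= e; by repeat case: eqP => //= _; rewrite mul0r.
Qed.

Lemma tele (a b g : nat -> rat) N : (forall k, (k < N)%N -> a k * g k.+1 = b k * g k) ->
  (\prod_(k < N) a k) * g N = (\prod_(k < N) b k) * g 0%N.
Proof.
elim: N => [|N IH] H; first by rewrite !big_ord0.
rewrite !big_ord_recr /= -mulrA H // mulrCA IH; last by move=> k hk; apply: H; rewrite ltnS ltnW.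
by rewrite mulrCA mulrA.
Qed.

Lemma nz_num {x d : nat} : (x%:R / d%:R : rat) != 0 -> (0 < x)%N.
Proof. by case: x => //; rewrite mul0r eqxx. Qed.

Lemma fw n (f : nat -> nat) : (2 <= n)%N -> f 0%N = 0%N ->
  (forall j, (j < n)%N -> urn_trans n j (f j) (f j.+1) != 0) ->
  forall k, (k < n)%N -> (f k <= n - k)%N /\ (f k <= k)%N /\ ((0 < k)%N -> (0 < f k)%N).
Proof.
move=> hn h0 H; elim => [|k IH] hk; first by rewrite h0.
have [h1 [h2 h3]] := IH (ltnW hk).
have := H k (ltnW hk); rewrite trans_fwd // /Wf.
move: h1 h2 h3 hk; set u := f k; set v := f k.+1.
move=> /leP h1 /leP h2 h3 /leP hk.
case: (v.+1 =P u) => e1 /=.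
  move/nz_num; rewrite bin_gt0 => /leP h4.
  split; [apply/leP|split; [apply/leP|move=> _; apply/leP]]; nlia.
case: (v =P u) => e2 /=.
  move/nz_num; rewrite muln_gt0 subn_gt0 => /andP[/leP h4 /leP h5].
  split; [apply/leP|split; [apply/leP|move=> _; apply/leP]]; nlia.
case: (v =P u.+1) => e3 /=.
  move/nz_num; rewrite bin_gt0 => /leP h4.
  split; [apply/leP|split; [apply/leP|move=> _; apply/leP]]; nlia.
by rewrite mul0r eqxx.
Qed.

Lemma step_rat k m u v : (0 < k)%N -> (1 < m)%N -> (0 < u)%N -> (u <= k)%N -> (u <= m)%N ->
  (0 < v)%N -> (v <= k.+1)%N -> (v < m)%N ->
  (Wf m u v)%:R / ('C(m,2))%:R * ((v`! * v.-1`! * (m.-1 - v)`! * (k.+1 - v)`!)%:R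
      / (m.-1`! * m.-1.-1`! * k.+1`! * k`!)%:R)
  = (Wr k u v)%:R / ('C(k.+1,2))%:R * ((u`! * u.-1`! * (m - u)`! * (k - u)`!)%:R
      / (m`! * m.-1`! * k`! * k.-1`!)%:R) :> rat.
Proof.
move=> hk hm hu huk hum hv hvk hvm.
have SN := step_nat k m u v hk hm hu huk hum hv hvk hvm.
case: k hk huk hvk SN => // k _ huk hvk SN.
case: m hm hum hvm SN => [|[|m]] // _ hum hvm SN.
rewrite !mulf_div -!natrM; apply/eqP.
rewrite eqr_div ?pnatr_eq0 -?lt0n ?muln_gt0 ?fact_gt0 ?bin_gt0 //.
rewrite -!natrM; apply/eqP; congr (_%:R).
rewrite /= in SN *.
by rewrite SN (den_nat k m).
Qed.

Definition Gp n k u : rat :=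
  (u`! * u.-1`! * (n - k - u)`! * (k - u)`!)%:R / ((n - k)`! * (n - k).-1`! * k`! * k.-1`!)%:R.
Definition G n k u := if k == 0%N then Gp n 1 1 else if k == n then Gp n n.-1 1 else Gp n k u.

Lemma step_mid n k u v : (0 < k)%N -> (k.+2 <= n)%N ->
  (0 < u)%N -> (u <= k)%N -> (u <= n - k)%N -> (0 < v)%N -> (v <= k.+1)%N -> (v <= n - k.+1)%N ->
  urn_trans n k u v * Gp n k.+1 v = urn_trans n (n - k.+1) v u * Gp n k u.
Proof.
move=> hk hkn hu huk hum hv hvk hvm.
have hkn' : (k < n)%N by apply: leq_trans hkn; rewrite ltnW.
rewrite trans_fwd // trans_rev // /Gp !subnS /=.
apply: step_rat => //; move/leP: (hkn) => ?; move/leP: (hvm) => ?; apply/leP; nlia.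
Qed.

Lemma trans_last n u v : (0 < n)%N -> urn_trans n n.-1 u v = (v == 0%N)%:R.
Proof. by case: n => // n _; rewrite /urn_trans /= ltnn. Qed.

Lemma Gp_nz n k u : Gp n k u != 0.
Proof. by rewrite /Gp mulf_neq0 ?invr_eq0 ?pnatr_eq0 -?lt0n ?muln_gt0 ?fact_gt0. Qed.

Lemma trans_first p : urn_trans p.+2 0 0 1 = 1.
Proof. by rewrite /urn_trans /= !subn0 divff // pnatr_eq0 -lt0n bin_gt0. Qed.

Lemma Gp_end p : Gp p.+2 p.+1 1 = Gp p.+2 1 1.
Proof.
rewrite /Gp /=.
have e1 : (p.+2 - p.+1 = 1)%N by rewrite subSS subSnn.
rewrite e1 !subnn !subn1 /=.
by congr (_%:R / _%:R); rewrite -!multE; ring.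
Qed.

Lemma main_f p (f : nat -> nat) :
 (f 0%N == 0%N)%:R * \prod_(i < p.+2) urn_trans p.+2 i (f i) (f i.+1) =
 (f p.+2 == 0%N)%:R * \prod_(i < p.+2) urn_trans p.+2 (p.+2 - i.+1) (f i.+1) (f i).
Proof.
have [h0|h0] := eqVneq (f 0%N) 0%N; last first.
  rewrite mul0r [in RHS]big_ord_recl /= subn1 trans_last //= (negbTE h0).
  by rewrite mul0r mulr0.
have [hn0|hn0] := eqVneq (f p.+2) 0%N; last first.
  rewrite mul0r [in LHS]big_ord_recr /= trans_last //= (negbTE hn0).
  by rewrite !mulr0.
rewrite !mul1r.
pose a k := urn_trans p.+2 k (f k) (f k.+1).
pose b k := urn_trans p.+2 (p.+2 - k.+1) (f k.+1) (f k).
change (\prod_(i < p.+2) a i = \prod_(i < p.+2) b i).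
destruct (classic (forall k, (0 < k)%N -> (k < p.+2)%N ->
   (0 < f k)%N /\ (f k <= k)%N /\ (f k <= p.+2 - k)%N)) as [B|nB].
- pose g k := G p.+2 k (f k).
  have step : forall k, (k < p.+2)%N -> a k * g k.+1 = b k * g k.
    move=> k hk; rewrite /a /b /g /G.
    have [->|k0] := eqVneq k 0%N.
      have [f1a [f1b _]] := B 1%N erefl erefl.
      have f1 : f 1%N = 1%N by apply/eqP; rewrite eqn_leq f1b f1a.
      rewrite f1 h0 /= subn1 /= trans_last // trans_first.
      by [].
    have [->|kn] := eqVneq k p.+1.
      have [fa [_ fb]] := B p.+1 erefl (ltnSn _).
      rewrite subSnn in fb.
      have f1 : f p.+1 = 1%N by apply/eqP; rewrite eqn_leq fb fa.
      rewrite f1 hn0 subnn trans_last // trans_first /= eqxx.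
      have -> : (p.+1 == p.+2) = false by apply/negbTE/eqP; lia.
      by rewrite Gp_end.
    have hk2 : (k.+2 <= p.+2)%N.
      by move/eqP: kn => kn; move/leP: hk => hk; apply/leP; lia.
    have -> : (k.+1 == p.+2) = false by apply/negbTE/eqP; move/eqP: kn => kn; lia.
    have -> : (k == p.+2) = false by apply/negbTE/eqP; move/leP: hk => hk; lia.
    rewrite /=.
    have k0' : (0 < k)%N by rewrite lt0n.
    have [u1 [u2 u3]] := B k k0' hk.
    have [v1 [v2 v3]] := B k.+1 erefl hk2.
    by apply: step_mid.
  have T := tele a b g (p.+2) step.
  have Gn : g p.+2 = g 0%N by rewrite /g /G eqxx /= Gp_end.
  rewrite Gn in T.
  by apply: (mulIf (Gp_nz p.+2 1 1)); exact: T.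
- have Za : \prod_(i < p.+2) a i = 0.
    apply/eqP/negPn/negP => /prodf_neq0 H.
    apply: nB => k k0 hk.
    have := fw p.+2 f erefl h0 (fun j hj => H (Ordinal hj) isT) k hk.
    by move=> [h1 [h2 h3]]; split; [exact: h3|split].
  have Zb : \prod_(i < p.+2) b i = 0.
    apply/eqP/negPn/negP => /prodf_neq0 H.
    apply: nB => k k0 hk.
    pose h j := f (p.+2 - j)%N.
    have Hh : forall j, (j < p.+2)%N -> urn_trans p.+2 j (h j) (h j.+1) != 0.
      move=> j hj.
      have hi : (p.+2 - j.+1 < p.+2)%N by apply/leP; move/leP: hj => hj; nlia.
      have := H (Ordinal hi) isT; rewrite /b /h /=.
      have e2 : ((p.+2 - j.+1).+1 = p.+2 - j)%N by move/leP: hj => hj; nlia.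
      have e1 : (p.+2 - (p.+2 - j) = j)%N by move/leP: hj => hj; nlia.
      by rewrite e2 e1.
    have h0' : h 0%N = 0%N by rewrite /h subn0.
    have hk' : (p.+2 - k < p.+2)%N by apply/leP; move/leP: hk => hk; move/leP: k0 => k0; nlia.
    have := fw p.+2 h erefl h0' Hh (p.+2 - k) hk'.
    have e : (p.+2 - (p.+2 - k) = k)%N by move/leP: hk => hk; nlia.
    rewrite /h e => [[h1 [h2 h3]]].
    have h4 : (0 < p.+2 - k)%N by rewrite subn_gt0.
    by split; [exact: h3|split].
  by rewrite Za Zb.
Qed.

Local Close Scope ring_scope.

Theorem theorem7 (n : nat) (hn : (2 <= n)%N) (s : seq nat) (hs : size s = n.+1) :
  urn_path_prob n s = urn_path_prob n (rev s).
Proof.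
case: n hn hs => [|[|p]] // _ hs.
rewrite /urn_path_prob.
pose f k := nth 0%N s k.
have Er : forall i, (i <= p.+2)%N -> nth 0%N (rev s) i = f (p.+2 - i)%N.
  move=> i hi; rewrite nth_rev hs //; by rewrite subSS.
transitivity ((f p.+2 == 0%N)%:R * \prod_(i < p.+2) urn_trans p.+2 (p.+2 - i.+1) (f i.+1) (f i))%R.
  exact: main_f p f.
rewrite Er // subn0; congr (_ * _)%R.
rewrite -(big_mkord (fun _ => true) (fun i => urn_trans p.+2 (p.+2 - i.+1) (f i.+1) (f i))).
rewrite -(big_mkord (fun _ => true) (fun k => urn_trans p.+2 k (nth 0%N (rev s) k) (nth 0%N (rev s) k.+1))).
rewrite [in RHS]big_nat_rev /=.
apply: eq_big_nat => i /andP[_ hi].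
rewrite add0n !Er; last 2 first.
- by apply/leP; move/leP: hi => hi; nlia.
- by rewrite leq_subr.
have e1 : (p.+2 - (p.+2 - i.+1) = i.+1)%N by rewrite subKn.
have e2 : (p.+2 - (p.+2 - i.+1).+1 = i)%N by move/leP: hi => hi; nlia.
by rewrite e1 e2.
Qed.
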